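(* Let $\Gamma$ be any simple graph and $d\geq 1$ an integer. Then $$\{|C| \;:\; C\subseteq V(\Gamma),\ d_\Gamma(C)=d\}=\{|C| \;:\; C\subseteq V(\Gamma),\ d_\Gamma(C)\geq d\},$$ where $d_\Gamma(C)=\min\{d_\Gamma(x,y)\;:\; x,y\in C,\ x\neq y\}$.
   Context: For a simple graph $\Gamma$, $d_\Gamma(x,y)$ denotes the length (number of edges) of a shortest path between vertices $x$ and $y$ of $\Gamma$. *)

(* Defs.v *)
From Stdlib Require Import Arith ClassicalEpsilon.

Definition simple_graph {T : Type} (adj : T -> T -> Prop) : Prop :=
  (forall x y, adj x y -> adj y x) /\ (forall x, ~ adj x x).

Inductive walk {T : Type} (adj : T -> T -> Prop) : nat -> T -> T -> Prop :=
| walk0 : forall x, walk adj 0 x x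
| walkS : forall n x y z, adj x y -> walk adj n y z -> walk adj (S n) x z.

Definition connected_graph {T : Type} (adj : T -> T -> Prop) : Prop :=
  forall x y : T, exists n, walk adj n x y.

Definition is_graph_dist {T : Type} (adj : T -> T -> Prop) (x y : T) (n : nat) : Prop :=
  walk adj n x y /\ forall m, walk adj m x y -> n <= m.

(* d_Gamma(x,y); meaningful when x and y are connected (always, for connected graphs) *)
Definition gdist {T : Type} (adj : T -> T -> Prop) (x y : T) : nat :=
  epsilon (inhabits 0) (fun n => is_graph_dist adj x y n).

Definition code_dist_eq {T : Type} (adj : T -> T -> Prop) (C : T -> Prop) (d : nat) : Prop :=
  (exists x y, C x /\ C y /\ x <> y /\ gdist adj x y = d) /\
  (forall x y, C x -> C y -> x <> y -> d <= gdist adj x y).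

(* d_Gamma(C) >= d, with d_Gamma(C) defined (C has two distinct elements) *)
Definition code_dist_ge {T : Type} (adj : T -> T -> Prop) (C : T -> Prop) (d : nat) : Prop :=
  (exists x y, C x /\ C y /\ x <> y) /\
  (forall x y, C x -> C y -> x <> y -> d <= gdist adj x y).

Definition equipotent {T : Type} (A B : T -> Prop) : Prop :=
  exists (f : {x | A x} -> {x | B x}) (g : {x | B x} -> {x | A x}),
    (forall a, g (f a) = a) /\ (forall b, f (g b) = b).

(* Main.v *)
Require Import Defs.
From Stdlib Require Import Arith ClassicalEpsilon.
From Stdlib Require Import Lia ProofIrrelevance.

Lemma least_nat (P : nat -> Prop) : (exists n, P n) -> exists n, P n /\ forall m, P m -> n <= m.
Proof.
  intros [n Hn]. revert Hn. induction n as [n IH] using lt_wf_ind. intros Hn.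
  destruct (classic (exists m, m < n /\ P m)) as [[m [Hm1 Hm2]]|Hno].
  - exact (IH m Hm1 Hm2).
  - exists n. split; auto. intros m Hm. destruct (le_lt_dec n m); auto.
    exfalso; apply Hno; eauto.
Qed.

Section G.
Context {T : Type} (adj : T -> T -> Prop) (Hg : simple_graph adj) (Hc : connected_graph adj).

Lemma gdist_spec x y : is_graph_dist adj x y (gdist adj x y).
Proof.
  unfold gdist. apply epsilon_spec.
  destruct (least_nat (fun n => walk adj n x y) (Hc x y)) as [n [H1 H2]].
  exists n. split; auto.
Qed.

Lemma gdist_le n x y : walk adj n x y -> gdist adj x y <= n.
Proof. intros H. apply (proj2 (gdist_spec x y)). exact H. Qed.

Lemma walk_app n m x y z : walk adj n x y -> walk adj m y z -> walk adj (n+m) x z.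
Proof.
  intros H; revert m z; induction H; intros m w Hw; simpl; auto.
  eapply walkS; eauto.
Qed.

Lemma walk_rev n x y : walk adj n x y -> walk adj n y x.
Proof.
  induction 1. constructor.
  replace (S n) with (n + 1) by lia. eapply walk_app; eauto.
  eapply walkS. apply (proj1 Hg); eauto. constructor.
Qed.

Lemma walk_split m x y : walk adj m x y -> forall d, d <= m ->
  exists v, walk adj d x v /\ walk adj (m - d) v y.
Proof.
  induction 1; intros d Hd.
  - exists x. assert (d = 0) by lia. subst. split; constructor.
  - destruct d. exists x. split. constructor. simpl. eapply walkS; eauto.
    destruct (IHwalk d) as [v [H1 H2]]. lia. exists v. split. eapply walkS; eauto.
    simpl. auto.
Qed.

Lemma gdist_sym x y : gdist adj x y = gdist adj y x.
Proof.
  apply Nat.le_antisymm; apply gdist_le; apply walk_rev; apply gdist_spec.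
Qed.

Lemma gdist_tri x y z : gdist adj x z <= gdist adj x y + gdist adj y z.
Proof. apply gdist_le. eapply walk_app; apply gdist_spec. Qed.

Lemma gdist_refl x : gdist adj x x = 0.
Proof. pose proof (gdist_le 0 x x (walk0 _ x)). lia. Qed.

End G.

Lemma sig_ext {T} (P : T -> Prop) (a b : {x | P x}) : proj1_sig a = proj1_sig b -> a = b.
Proof. destruct a, b; simpl; intros; subst; f_equal; apply proof_irrelevance. Qed.

Lemma equi_trans {T} (A B C : T -> Prop) : equipotent A B -> equipotent B C -> equipotent A C.
Proof.
  intros [f [g [H1 H2]]] [f' [g' [H1' H2']]].
  exists (fun a => f' (f a)), (fun c => g (g' c)). split; intros.
  rewrite H1'; auto. rewrite H2; auto.
Qed.

Lemma swap_equi {T} (A : T -> Prop) y v : A y -> ~ A v ->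
  equipotent (fun t => (A t /\ t <> y) \/ t = v) A.
Proof.
  intros Hy Hv.
  assert (F : forall t, (A t /\ t <> y) \/ t = v -> t <> v -> A t).
  { intros t [[]|] ?; tauto. }
  assert (G : forall t, A t -> t <> y -> (A t /\ t <> y) \/ t = v) by tauto.
  assert (Gv : (A v /\ v <> y) \/ v = v) by tauto.
  exists (fun a => match excluded_middle_informative (proj1_sig a = v) with
              | left _ => exist _ y Hy
              | right n => exist _ (proj1_sig a) (F _ (proj2_sig a) n) end).
  exists (fun b => match excluded_middle_informative (proj1_sig b = y) with
              | left _ => exist _ v Gv
              | right n => exist _ (proj1_sig b) (G _ (proj2_sig b) n) end).
  split.
  - intros [a Ha]; apply sig_ext; simpl.
    destruct (excluded_middle_informative (a = v)); simpl.
    + destruct (excluded_middle_informative (y = y)); simpl; congruence.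
    + destruct (excluded_middle_informative (a = y)); simpl; auto.
      subst. destruct Ha as [[]|]; congruence.
  - intros [b Hb]; apply sig_ext; simpl.
    destruct (excluded_middle_informative (b = y)); simpl.
    + destruct (excluded_middle_informative (v = v)); simpl; congruence.
    + destruct (excluded_middle_informative (b = v)); simpl; auto.
      subst. contradiction.
Qed.

Theorem proposition2p1 (T : Type) (adj : T -> T -> Prop) (d : nat)
  (Hg : simple_graph adj) (Hc : connected_graph adj) (Hd : 1 <= d) :
  forall C : T -> Prop,
    (exists C1, code_dist_eq adj C1 d /\ equipotent C1 C) <->
    (exists C2, code_dist_ge adj C2 d /\ equipotent C2 C).
Proof.
  intros C. split.
  - intros [C1 [[[x [y [? [? [? ?]]]]] Hg2] He]]. exists C1. split; auto.
    split; eauto 6.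
  - intros [C2 [[Hex Hge] He]].
    destruct (least_nat (fun k => exists x y, C2 x /\ C2 y /\ x <> y /\ gdist adj x y = k))
      as [m [[x [y [Hx [Hy [Hxy Hm]]]]] Hmin]].
    { destruct Hex as [x [y [? [? ?]]]]. eauto 7. }
    assert (Hmd : d <= m) by (subst; auto).
    destruct (Nat.eq_dec m d) as [E|NE].
    + exists C2. split; auto. split; auto. subst; exists x, y; auto.
    + destruct (walk_split adj m x y (ltac:(rewrite <- Hm; apply gdist_spec; auto)) d Hmd)
        as [v [W1 W2]].
      pose proof (gdist_le adj Hc _ _ _ W1) as D1.
      pose proof (gdist_le adj Hc _ _ _ W2) as D2.
      pose proof (gdist_tri adj Hc x v y) as T1.
      assert (Dxv : gdist adj x v = d) by lia.
      assert (Hfar : forall z, C2 z -> z <> y -> d <= gdist adj z v).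
      { intros z Hz Hzy. pose proof (gdist_tri adj Hc z v y).
        assert (m <= gdist adj z y) by (apply Hmin; eauto 7). lia. }
      assert (Hvy : v <> y) by (intro; subst; lia).
      assert (HnC : ~ C2 v).
      { intro Hv. pose proof (Hfar v Hv Hvy). rewrite gdist_refl in H; auto. lia. }
      exists (fun t => (C2 t /\ t <> y) \/ t = v). split.
      * split.
        -- exists x, v. split. left; split; auto. split. right; auto.
           split; auto. intro; subst; auto.
        -- intros a b Ha Hb Hab.
           destruct Ha as [[Ha Hay]|Ha]; destruct Hb as [[Hb Hby]|Hb].
           ++ auto.
           ++ rewrite Hb. apply Hfar; auto.
           ++ rewrite Ha, (gdist_sym adj Hg Hc). apply Hfar; auto.
           ++ congruence.
      * eapply equi_trans; [apply swap_equi; auto | exact He].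
Qed.
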